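(* Let $n\geq 1$. The classes $\alpha_{\mathcal D}=\frac{1}{|\mathrm{Stab}_{S_n}(\Delta_{\mathcal D})|}\sum_{\sigma\in S_n}\sigma(\mu_{\Delta_{\mathcal D}})\in H^{|E\mathcal D|}(\mathbb{Z}\mathcal{A}_n;\mathbb{Q})$, for $\mathcal D$ ranging over $\mathcal{D}_n$, form a basis over $\mathbb{Q}$ of $H^\bullet(\mathbb{Z}\mathcal{A}_n;\mathbb{Q})^{S_n}$.
   Context: $P_n$ is the pure braid group on $n$ strands and $\mathbb{Z}\mathcal{A}_n=P_n/[P_n,P_n]\cong\mathbb{Z}^{n(n-1)/2}$. $H^\bullet(\mathbb{Z}\mathcal{A}_n;\mathbb{Q})$ is the exterior algebra on classes $\omega_{ij}$, $1\le i<j\le n$, and the symmetric group $S_n$ acts on it by the algebra automorphisms with $\sigma(\omega_{ij})=\omega_{\sigma(i)\sigma(j)}$ if $\sigma(i)<\sigma(j)$ and $\omega_{\sigma(j)\sigma(i)}$ otherwise. Graphs are finite simple graphs; $K_n$ is the complete graph on $\{1,\dots,n\}$, and $S_n$ acts on subgraphs of $K_n$. For a subgraph $\Delta\subset K_n$ (vertex set $\{1,\dots,n\}$) with edges $(i_1,j_1),\dots,(i_k,j_k)$, $i_t<j_t$, listed lexicographically, $\mu_\Delta=\omega_{i_1j_1}\cdots\omega_{i_kj_k}$. A graph is invariant if every automorphism induces an even permutation of its edge set. $\mathcal{D}_n$ is the set of isomorphism classes of invariant graphs with exactly $n$ vertices (isolated vertices allowed); for each $\mathcal D\in\mathcal D_n$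 a representative $\Delta_{\mathcal D}\subset K_n$ is fixed, and $|E\mathcal D|$ is its number of edges. *)

(* Defs.v *)
From HB Require Import structures.
From mathcomp Require Import all_boot all_order all_algebra.
From mathcomp Require Import fingroup perm action.
Set Implicit Arguments. Unset Strict Implicit. Unset Printing Implicit Defensive.
Import GRing.Theory.
Local Open Scope ring_scope.

(* Vertices of K_n are 'I_n (i.e. 0..n-1 instead of 1..n).
   An edge of K_n is a 2-element subset of the vertex set. *)
Definition edge (n : nat) := {e : {set 'I_n} | #|e| == 2%N}.

Lemma edge_act_proof n (s : 'S_n) (e : edge n) : #|s @: val e| == 2%N.
Proof. by rewrite (card_imset _ (@perm_inj _ s)) (valP e). Qed.

Definition edge_act n (s : 'S_n) (e : edge n) : edge n :=
  exist _ (s @: val e) (edge_act_proof s e).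

Lemma edge_act_inj n (s : 'S_n) : injective (edge_act s).
Proof.
move=> e f /(congr1 val) /= H; apply: val_inj.
by apply: (imset_inj (@perm_inj _ s)).
Qed.

Definition edge_perm n (s : 'S_n) : {perm edge n} := perm (@edge_act_inj n s).

(* lexicographic order on edges (i,j), i<j: code (i,j) = i*n + j *)
Definition edge_code n (e : edge n) : nat :=
  ((\big[minn/n]_(i in val e) (i : nat)) * n + \max_(i in val e) (i : nat))%N.
Definition edge_le n (e f : edge n) : bool := (edge_code e <= edge_code f)%N.
Definition edge_lt n (e f : edge n) : bool := (edge_code e < edge_code f)%N.

Definition sorted_edges n (A : {set edge n}) : seq (edge n) := sort (@edge_le n) (enum A).

(* The exterior algebra on generators omega_e (e an edge of K_n), modelling
   H^*(Z A_n; Q): an element is its coordinate vector in the monomial basis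
   indexed by subsets of edges (each basis monomial = increasing product). *)
Definition ext n := {ffun {set edge n} -> rat}.

Definition ext_basis n (A : {set edge n}) : ext n := [ffun C => (C == A)%:R].
Definition ext_scale n (c : rat) (x : ext n) : ext n := [ffun C => c * x C].

Definition shuffle_sign n (A B : {set edge n}) : rat :=
  (-1) ^+ #|[set p in setX A B | edge_lt p.2 p.1]|.

Definition wedge n (x y : ext n) : ext n :=
  [ffun C => \sum_(A : {set edge n}) \sum_(B : {set edge n})
     (if (A :&: B == set0) && (A :|: B == C)
      then shuffle_sign A B * x A * y B else 0)].

Definition ext_one n : ext n := ext_basis set0.
Definition omega n (e : edge n) : ext n := ext_basis [set e].

Definition mu n (D : {set edge n}) : ext n :=
  foldr (@wedge n) (ext_one n) (map (@omega n) (sorted_edges D)).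

(* the S_n action: the algebra automorphism with s(omega_e) = omega_{s e} *)
Definition ext_act n (s : 'S_n) (x : ext n) : ext n :=
  \sum_(A : {set edge n})
     ext_scale (x A) (foldr (@wedge n) (ext_one n)
                        (map (fun e => omega (edge_perm s e)) (sorted_edges A))).

Definition ext_invariant n (x : ext n) : Prop := forall s : 'S_n, ext_act s x = x.

(* graph-theoretic notions: subgraph Delta of K_n = its set of edges *)
Definition stab n (D : {set edge n}) : {set 'S_n} :=
  [set s : 'S_n | edge_perm s @: D == D].

Definition invariant_graph n (D : {set edge n}) : Prop :=
  forall s : 'S_n, s \in stab D -> ~~ odd_perm (restr_perm D (edge_perm s)).

Definition graph_iso n (D1 D2 : {set edge n}) : Prop :=
  exists s : 'S_n, edge_perm s @: D1 = D2.

Definition alpha n (D : {set edge n}) : ext n :=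
  ext_scale (#|stab D|%:R)^-1 (\sum_(s : 'S_n) ext_act s (mu D)).

(* Main.v *)
Require Import Defs.
From HB Require Import structures.
From mathcomp Require Import all_boot all_order all_algebra.
From mathcomp Require Import fingroup perm action.
From mathcomp Require Import zify.
Import GRing.Theory.
Local Open Scope ring_scope.

Module Helpers.
Set Implicit Arguments. Unset Strict Implicit. Unset Printing Implicit Defensive.
Import Num.Theory.

Section Code.
Variable n : nat.

Lemma big_minn_foldr (s : seq 'I_n) :
  \big[minn/n]_(i <- s) (i : nat) = foldr (fun (k : 'I_n) acc => minn (k : nat) acc) n s.
Proof. by elim: s => [|x s IH]; rewrite ?big_nil ?big_cons ?IH. Qed.

Lemma big_maxn_foldr (s : seq 'I_n) :
  \big[maxn/0%N]_(i <- s) (i : nat) = foldr (fun (k : 'I_n) acc => maxn (k : nat) acc) 0%N s.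
Proof. by elim: s => [|x s IH]; rewrite ?big_nil ?big_cons ?IH. Qed.

Lemma foldr_min_spec (s : seq 'I_n) :
  (forall k, k \in s -> (foldr (fun (k : 'I_n) acc => minn (k : nat) acc) n s <= k)%N) /\
  (s != [::] -> exists2 x, x \in s & foldr (fun (k : 'I_n) acc => minn (k : nat) acc) n s = x).
Proof.
elim: s => [|x s [IH1 IH2]] //=; split.
  move=> k; rewrite inE => /orP[/eqP->|/IH1 H]; first by rewrite geq_minl.
  by rewrite geq_min H orbT.
move=> _; case: s IH1 IH2 => [|y s] IH1 IH2.
  by exists x; rewrite ?inE ?eqxx //=; have := ltn_ord x; lia.
have [x' Hx' ->] := IH2 isT.
case: (leqP x x') => H.
  by exists x; rewrite ?inE ?eqxx //; lia.
by exists x'; [rewrite in_cons Hx' orbT | lia].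
Qed.

Lemma foldr_max_spec (s : seq 'I_n) :
  (forall k, k \in s -> (k <= foldr (fun (k : 'I_n) acc => maxn (k : nat) acc) 0%N s)%N) /\
  (s != [::] -> exists2 x, x \in s & foldr (fun (k : 'I_n) acc => maxn (k : nat) acc) 0%N s = x).
Proof.
elim: s => [|x s [IH1 IH2]] //=; split.
  move=> k; rewrite inE => /orP[/eqP->|/IH1 H]; first by rewrite leq_maxl.
  by rewrite leq_max H orbT.
move=> _; case: s IH1 IH2 => [|y s] IH1 IH2.
  by exists x; rewrite ?inE ?eqxx //; rewrite maxn0.
have [x' Hx' ->] := IH2 isT.
case: (leqP x x') => H.
  by exists x'; [rewrite in_cons Hx' orbT | lia].
by exists x; rewrite ?inE ?eqxx //; lia.
Qed.

Lemma edge_spec (e : edge n) : exists x y : 'I_n,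
  [/\ (x < y)%N, val e = [set x; y] & edge_code e = (x * n + y)%N].
Proof.
pose s := [seq i <- index_enum 'I_n | i \in val e].
have memS k : (k \in s) = (k \in val e) by rewrite mem_filter mem_index_enum andbT.
have sne : s != [::].
  have [k Hk] : exists k, k \in val e.
    by apply/set0Pn; apply/eqP=> E; have := valP e; rewrite E cards0.
  by apply/eqP=> s0; rewrite -memS s0 in Hk.
have Emin : \big[minn/n]_(i in val e) (i:nat) = foldr (fun (k : 'I_n) acc => minn (k : nat) acc) n s.
  by rewrite -big_minn_foldr big_filter.
have Emax : \max_(i in val e) (i:nat) = foldr (fun (k : 'I_n) acc => maxn (k : nat) acc) 0%N s.
  by rewrite -big_maxn_foldr big_filter.
have [m1 m2] := foldr_min_spec s; have [M1 M2] := foldr_max_spec s.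
have [x xs Ex] := m2 sne; have [y ys Ey] := M2 sne.
have lexy : forall k, k \in val e -> (x <= k <= y)%N.
  by move=> k; rewrite -memS => ks; rewrite -Ex -Ey m1 ?M1.
have xy : (x < y)%N.
  rewrite ltn_neqAle (andP (lexy _ (etrans (esym (memS x)) xs))).2 andbT.
  apply/negP=> /eqP exy.
  have : val e \subset [set x].
    apply/subsetP=> k ke; rewrite inE; have := lexy k ke => H.
    by apply/eqP; apply: val_inj => /=; lia.
  by move/subset_leq_card; rewrite cards1 (eqP (valP e)).
exists x, y; split => //; last by rewrite /edge_code Emin Emax -Ex -Ey.
apply/esym/eqP; rewrite eqEcard cards2 (eqP (valP e)).
have -> : (x != y) by rewrite -(inj_eq val_inj) /= neq_ltn xy.
rewrite leqnn andbT; apply/subsetP=> k; rewrite !inE => /orP[]/eqP->.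
  by rewrite -memS. by rewrite -memS.
Qed.

Lemma edge_code_inj : injective (@edge_code n).
Proof.
move=> e f; have [x [y [xy Ee ->]]] := edge_spec e.
have [x' [y' [xy' Ef ->]]] := edge_spec f.
move=> H.
have yn : (y < n)%N by []. have yn' : (y' < n)%N by [].
have Hx : (x : nat) = x'.
  have := congr1 (fun t => t %/ n)%N H.
  have n0 : (0 < n)%N by apply: leq_ltn_trans yn.
  by rewrite !divnMDl ?divn_small ?addn0.
have Hy : (y : nat) = y' by move: H; rewrite Hx => /addnI.
apply: val_inj; rewrite Ee Ef; congr [set _; _]; exact: val_inj.
Qed.
End Code.

Section Ext.
Variable n : nat.
Local Notation T := (edge n).

Lemma ext_basisE (A C : {set T}) : ext_basis A C = (C == A)%:R.
Proof. by rewrite ffunE. Qed.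

Lemma ext_scaleE c (x : ext n) C : ext_scale c x C = c * x C.
Proof. by rewrite ffunE. Qed.

Lemma ext_scale1 (x : ext n) : ext_scale 1 x = x.
Proof. by apply/ffunP => C; rewrite ffunE mul1r. Qed.

Lemma ext_scale0 (x : ext n) : ext_scale 0 x = 0.
Proof. by apply/ffunP => C; rewrite !ffunE mul0r. Qed.

Lemma ext_scaleM a b (x : ext n) : ext_scale a (ext_scale b x) = ext_scale (a * b) x.
Proof. by apply/ffunP => C; rewrite !ffunE mulrA. Qed.

Lemma wedge_basis (A B : {set T}) :
  wedge (ext_basis A) (ext_basis B) =
  [ffun C => if (A :&: B == set0) && (A :|: B == C) then shuffle_sign A B else 0].
Proof.
apply/ffunP => C; rewrite !ffunE [X in X = _](bigD1 A) //= [X in _ + X = _]big1 => [|A' nA']; last first.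
  by apply: big1 => B' _; rewrite ext_basisE (negPf nA'); case: ifP => //; rewrite mulr0 mul0r.
rewrite addr0 [X in X = _](bigD1 B) //= [X in _ + X = _]big1 => [|B' nB']; last first.
  by rewrite !ext_basisE (negPf nB'); case: ifP => //; rewrite mulr0.
by rewrite addr0 !ext_basisE !eqxx !mulr1.
Qed.

Lemma wedge_scaler (x : ext n) k (y : ext n) :
  wedge x (ext_scale k y) = ext_scale k (wedge x y).
Proof.
apply/ffunP => C; rewrite !ffunE mulr_sumr; apply: eq_bigr => A _.
rewrite mulr_sumr; apply: eq_bigr => B _; rewrite ffunE.
by case: ifP => _; [rewrite mulrCA mulrA | rewrite mulr0].
Qed.

Fixpoint inv (l : seq T) : nat :=
  if l is x :: l' then (count (fun b => edge_lt b x) l' + inv l')%N else 0%N.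

Lemma card_filter_set (l : seq T) (P : pred T) : uniq l ->
  #|[set b in [set z in l] | P b]| = count P l.
Proof.
move=> ul; rewrite -size_filter -(card_uniqP (filter_uniq P ul)).
by apply: eq_card => b; rewrite !inE mem_filter andbC.
Qed.

Lemma omega_wedge x (B : {set T}) : x \notin B ->
  wedge (omega x) (ext_basis B) =
  ext_scale ((-1) ^+ #|[set b in B | edge_lt b x]|) (ext_basis (x |: B)).
Proof.
move=> xB; rewrite /omega wedge_basis; apply/ffunP => C; rewrite !ffunE.
have -> : [set x] :&: B == set0.
  by apply/eqP/setP => z; rewrite !inE; case: eqP => // ->; rewrite (negPf xB).
rewrite /= eq_sym; case: eqP => _; rewrite ?mulr0 // mulr1 /shuffle_sign.
congr (_ ^+ _).
have -> : [set p in setX [set x] B | edge_lt p.2 p.1] = setX [set x] [set b in B | edge_lt b x].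
  apply/setP => -[a b]; rewrite !inE /=; case: eqP => [->|] //=.
by rewrite cardsX cards1 mul1n.
Qed.

Lemma prod_omega (l : seq T) : uniq l ->
  foldr (@wedge n) (ext_one n) (map (@omega n) l) =
  ext_scale ((-1) ^+ inv l) (ext_basis [set z in l]).
Proof.
elim: l => [_|x l IH] /=.
  rewrite ext_scale1 /ext_one; congr ext_basis; apply/setP => z; by rewrite !inE.
case/andP => xl ul; rewrite IH // wedge_scaler omega_wedge; last by rewrite inE.
rewrite ext_scaleM card_filter_set // -exprD addnC set_cons.
by [].
Qed.

Lemma sorted_edges_uniq (A : {set T}) : uniq (sorted_edges A).
Proof. by rewrite sort_uniq enum_uniq. Qed.

Lemma mem_sorted_edges (A : {set T}) z : (z \in sorted_edges A) = (z \in A).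
Proof. by rewrite mem_sort mem_enum. Qed.

Lemma set_sorted_edges (A : {set T}) : [set z in sorted_edges A] = A.
Proof. by apply/setP => z; rewrite inE mem_sorted_edges. Qed.

Lemma inv_sorted (A : {set T}) : inv (sorted_edges A) = 0%N.
Proof.
have : sorted (@edge_le n) (sorted_edges A).
  by apply: sort_sorted => a b; apply: leq_total.
elim: (sorted_edges A) => [|x l IH] //= pl.
rewrite IH ?(path_sorted pl) // addn0.
have : all (@edge_le n x) l.
  by apply: order_path_min pl => a b c; apply: leq_trans.
move/allP => H; apply/eqP; rewrite -leqn0 leqNgt -has_count; apply/hasPn => b /H.
by rewrite /edge_le /edge_lt -leqNgt.
Qed.

Lemma mu_basis (D : {set T}) : mu D = ext_basis D.
Proof.
by rewrite /mu prod_omega ?sorted_edges_uniq // inv_sorted expr0 ext_scale1 set_sorted_edges.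
Qed.

Definition eps (s : 'S_n) (A : {set T}) : rat :=
  (-1) ^+ inv (map (edge_perm s) (sorted_edges A)).

Lemma Q_eq (s : 'S_n) (A : {set T}) :
  foldr (@wedge n) (ext_one n) (map (fun e => omega (edge_perm s e)) (sorted_edges A)) =
  ext_scale (eps s A) (ext_basis (edge_perm s @: A)).
Proof.
have -> : map (fun e => omega (edge_perm s e)) (sorted_edges A) =
  map (@omega n) (map (edge_perm s) (sorted_edges A)) by rewrite -map_comp.
rewrite prod_omega; last first.
  by rewrite map_inj_uniq ?sorted_edges_uniq //; apply: perm_inj.
congr ext_scale; congr ext_basis; apply/setP => z; rewrite inE.
apply/mapP/imsetP => -[y yA ->]; exists y => //; move: yA; by rewrite mem_sorted_edges.
Qed.

Lemma ext_act_basis (s : 'S_n) (A : {set T}) :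
  ext_act s (ext_basis A) = ext_scale (eps s A) (ext_basis (edge_perm s @: A)).
Proof.
rewrite /ext_act (bigD1 A) //= big1 => [|B nB]; last by rewrite ext_basisE (negPf nB) ext_scale0.
by rewrite addr0 ext_basisE eqxx ext_scale1 Q_eq.
Qed.

Lemma ext_act_coef (s : 'S_n) (x : ext n) (A : {set T}) :
  ext_act s x (edge_perm s @: A) = eps s A * x A.
Proof.
rewrite /ext_act sum_ffunE (bigD1 A) //= big1 => [|B nB]; last first.
  rewrite Q_eq !ext_scaleE ext_basisE.
  have -> : (edge_perm s @: A == edge_perm s @: B) = false.
    by apply/negbTE; apply: contra nB => /eqP /(imset_inj (@perm_inj _ _)) ->.
  by rewrite !mulr0.
by rewrite addr0 Q_eq !ext_scaleE ext_basisE eqxx mulr1 mulrC.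
Qed.

End Ext.

Section Sign.
Variable n : nat.
Local Notation T := (edge n).
Local Notation lt := (@edge_lt n).
Local Open Scope nat_scope.

Lemma count_sum (P : pred T) (l : seq T) : count P l = \sum_(b <- l) (P b : nat).
Proof. by elim: l => [|x l IH] /=; rewrite ?big_nil ?big_cons ?IH. Qed.

Lemma odd_sum_double (l : seq T) (h g : T -> nat) :
  (forall b, b \in l -> h b = (g b).*2) -> odd (\sum_(b <- l) h b) = false.
Proof.
elim: l => [|x l IH] H; rewrite ?big_nil ?big_cons // oddD H ?mem_head // odd_double IH //.
by move=> b bl; apply: H; rewrite in_cons bl orbT.
Qed.

Definition Rf (f : T -> T) (l : seq T) : nat :=
  \sum_(a <- l) \sum_(b <- l) (lt a b && lt (f b) (f a) : nat).

Lemma lt_irr x : lt x x = false.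
Proof. by rewrite /edge_lt ltnn. Qed.

Lemma L0 (f : T -> T) (finj : injective f) (l : seq T) : uniq l ->
  odd (inv (map f l)) = odd (inv l) (+) odd (Rf f l).
Proof.
elim: l => [|x l IH]; first by rewrite /Rf big_nil.
move=> /= /andP [xl ul].
pose t a b := (lt a b && lt (f b) (f a) : nat).
have E : Rf f (x :: l) = ((\sum_(b <- l) t x b) + (\sum_(a <- l) t a x) + Rf f l)%N.
  rewrite /Rf big_cons big_cons /t lt_irr add0n.
  rewrite [X in (_ + X)%N = _](eq_bigr (fun a => t a x + \sum_(b <- l) t a b)%N) => [|a _]; last by rewrite big_cons.
  by rewrite big_split /= addnA.
have key : odd (count (preim f (lt^~ (f x))) l + count (fun b => lt b x) l
               + \sum_(b <- l) t x b + \sum_(a <- l) t a x) = false.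
  rewrite !count_sum -!big_split /=.
  apply: (@odd_sum_double _ _ (fun b => (lt b x || lt (f b) (f x)))) => b bl.
  have h1 : edge_code b != edge_code x.
    by apply: contra xl => /eqP /edge_code_inj <-.
  have h2 : edge_code (f b) != edge_code (f x).
    by apply: contra xl => /eqP /edge_code_inj /finj <-.
  rewrite /t /edge_lt; move: h1 h2; lia.
rewrite E count_map oddD (IH ul).
move: key; rewrite !oddD.
by case: (odd (count _ l)); case: (odd (count _ l)); case: (odd (\sum_(b <- l) _));
   case: (odd (\sum_(a <- l) _)); case: (odd (inv l)); case: (odd (Rf f l)).
Qed.

Lemma sum_if_eq (l : seq T) y (K : nat) : uniq l -> y \in l ->
  \sum_(b <- l) (if b == y then K else 0%N) = K.
Proof.
elim: l => // z l IH /andP[zl ul]; rewrite in_cons big_cons.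
case: (eqVneq z y) => [Ezy _ | nzy]; last first.
  by rewrite add0n => yl; rewrite IH.
rewrite big1_seq ?addn0 // => b /andP [_ bl]; case: eqP => // E.
by rewrite Ezy -E bl in zl.
Qed.

Lemma tperm_cases (x y z : T) : x != y ->
  (z = x /\ tperm x y z = y) \/ (z = y /\ tperm x y z = x) \/
  (z != x /\ z != y /\ tperm x y z = z).
Proof.
move=> xy; case: (eqVneq z x) => [->|zx]; first by left; rewrite tpermL.
case: (eqVneq z y) => [->|zy]; first by right; left; rewrite tpermR.
by right; right; rewrite tpermD // eq_sym.
Qed.

Lemma Kp (x y : T) (l : seq T) : uniq l -> x \in l -> y \in l -> x != y ->
  odd (Rf (tperm x y) l).
Proof.
wlog lxy : x y / lt x y.
  move=> W ul xl yl xy.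
  have : edge_code x != edge_code y by apply: contra xy => /eqP /edge_code_inj ->.
  case: (ltngtP (edge_code x) (edge_code y)) => // H _; first exact: W.
  by rewrite tpermC; apply: W => //; rewrite eq_sym.
move=> ul xl yl xy.
have yx : y != x by rewrite eq_sym.
pose h z := (lt x z && lt z y : nat).
have pt : forall a b, (lt a b && lt (tperm x y b) (tperm x y a) : nat) =
    ((if b == y then (a == x) + h a else 0) + (if a == x then h b else 0))%N.
  move=> a b.
  have [[-> ->]|[[-> ->]|[ax [ay ->]]]] := tperm_cases a xy;
  have [[-> ->]|[[-> ->]|[bx [bY ->]]]] := tperm_cases b xy;
  rewrite /h ?eqxx ?(negbTE xy) ?(negbTE yx) ?(negbTE ax) ?(negbTE ay)
     ?(negbTE bx) ?(negbTE bY) /=; move: lxy; rewrite /edge_lt; lia.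
rewrite /Rf (eq_bigr (fun a => ((a == x) + h a) + (if a == x then \sum_(b <- l) h b else 0))%N).
  rewrite !big_split /= -count_sum count_uniq_mem // xl sum_if_eq //.
  by rewrite -addnA addnn oddD odd_double.
move=> a _; rewrite (eq_bigr _ (fun b _ => pt a b)) big_split /= sum_if_eq //.
by congr addn; case: eqP => // _; rewrite big1_seq.
Qed.

Lemma Kperm (q : {perm T}) (l : seq T) : uniq l -> (forall z, q z != z -> z \in l) ->
  odd (inv (map q l)) = odd (inv l) (+) odd_perm q.
Proof.
have [m] := ubnP #|[pred x | q x != x]|; elim: m q l => // m IHm q l /ltnSE-le_q_m ul supp.
case: (pickP (fun x => q x != x)) => [x qx | qid]; last first.
  have -> : q = 1%g by apply/permP => z; apply/eqP; rewrite perm1; move: (qid z) => /= /negbFE.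
  by rewrite odd_perm1 addbF map_id_in // => z _; rewrite perm1.
set y := (q^-1)%g x.
have qy : q y = x by rewrite /y permKV.
have xy : x != y by apply: contra qx => /eqP E; rewrite {1}E qy.
have xl : x \in l by exact: supp.
have yl : y \in l.
  apply: supp; apply: contra qx => /eqP E.
  have exy : x = y by rewrite -qy E.
  by rewrite {1}exy qy.
set q' := (tperm x y * q)%g.
have Eq : q = (tperm x y * q')%g by rewrite /q' mulgA tperm2 mul1g.
have Emap : map q l = map q' (map (tperm x y) l).
  by rewrite -map_comp; apply: eq_map => z /=; rewrite {1}Eq permM.
have ul' : uniq (map (tperm x y) l) by rewrite map_inj_uniq //; apply: perm_inj.
rewrite Emap IHm //; last first.
  move=> z; rewrite /q' permM => Hz.
  have zl : z \in l.
    have [[-> _]|[[-> _]|[zx [zy E]]]] := tperm_cases z xy => //.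
    by move: Hz; rewrite E => Hz; apply: supp.
  have [[-> _]|[[-> _]|[zx [zy E]]]] := tperm_cases z xy; apply/mapP.
  - by exists y => //; rewrite tpermR.
  - by exists x => //; rewrite tpermL.
  - by exists z => //; rewrite E.
- rewrite (cardD1 x) !inE qx in le_q_m; apply: leq_ltn_trans le_q_m.
  apply: subset_leq_card; apply/subsetP=> z.
  rewrite !inE /q' permM permE /= -(canF_eq (permK _)).
  have [-> | ne_zx] := eqVneq z x; first by rewrite permKV eqxx.
  by case: (q z =P x) => // -> _; rewrite eq_sym.
- rewrite L0 ?Kp //; last by apply: perm_inj.
  rewrite [in RHS]Eq odd_mul_tperm xy.
  by case: (odd (inv l)); case: (odd_perm q').
Qed.

End Sign.

Section Main.
Variable n : nat.
Local Notation T := (edge n).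

Lemma edge_perm_mul (s t : 'S_n) : edge_perm (s * t)%g = (edge_perm s * edge_perm t)%g.
Proof.
apply/permP => e; apply: val_inj; rewrite permM !permE /= -imset_comp.
by apply: eq_imset => i /=; rewrite permM.
Qed.

Lemma imset_permM (p q : {perm T}) (D : {set T}) : (p * q)%g @: D = q @: (p @: D).
Proof. by rewrite -imset_comp; apply: eq_imset => e; rewrite permM. Qed.

Lemma mem_map_sorted (s : 'S_n) (A : {set T}) z :
  (z \in map (edge_perm s) (sorted_edges A)) = (z \in edge_perm s @: A).
Proof.
apply/mapP/imsetP => -[y yA ->]; exists y => //; move: yA; by rewrite mem_sorted_edges.
Qed.

Lemma Rf_perm (f : T -> T) (l1 l2 : seq T) : perm_eq l1 l2 -> Rf f l1 = Rf f l2.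
Proof.
move=> H; rewrite /Rf (perm_big _ H); apply: eq_bigr => a _; exact: perm_big.
Qed.

Lemma eps_cocycle (s t : 'S_n) (D : {set T}) :
  eps (s * t)%g D = eps t (edge_perm s @: D) * eps s D.
Proof.
rewrite /eps -[X in X = _]signr_odd -[X in _ = X * _]signr_odd -[X in _ = _ * X]signr_odd edge_perm_mul.
have -> : map (edge_perm s * edge_perm t)%g (sorted_edges D) =
          map (edge_perm t) (map (edge_perm s) (sorted_edges D)).
  by rewrite -map_comp; apply: eq_map => z; rewrite permM.
have u1 : uniq (map (edge_perm s) (sorted_edges D)).
  by rewrite map_inj_uniq ?sorted_edges_uniq //; apply: perm_inj.
rewrite (L0 (@perm_inj _ (edge_perm t)) u1).
rewrite (L0 (@perm_inj _ (edge_perm t)) (sorted_edges_uniq (edge_perm s @: D))).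
rewrite inv_sorted /= (@Rf_perm _ _ (sorted_edges (edge_perm s @: D))); last first.
  apply: uniq_perm => //; first exact: sorted_edges_uniq.
  by move=> z; rewrite mem_map_sorted mem_sorted_edges.
by rewrite signr_addb mulrC.
Qed.

Lemma eps_stab (s : 'S_n) (A : {set T}) : edge_perm s @: A = A ->
  eps s A = (-1) ^+ odd_perm (restr_perm A (edge_perm s)).
Proof.
move=> sA; rewrite /eps -signr_odd.
have nA : (edge_perm s \in 'N(A | 'P))%g.
  apply/astabsP => z /=; by rewrite apermE -{1}sA mem_imset //; apply: perm_inj.
have -> : map (edge_perm s) (sorted_edges A) = map (restr_perm A (edge_perm s)) (sorted_edges A).
  by apply/eq_in_map => z; rewrite mem_sorted_edges => zA; rewrite restr_permE.
rewrite Kperm ?sorted_edges_uniq ?inv_sorted //.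
move=> z Hz; rewrite mem_sorted_edges.
exact: (subsetP (restr_perm_on A (edge_perm s))) z Hz.
Qed.

Lemma eps_sq (s : 'S_n) (A : {set T}) : eps s A * eps s A = 1.
Proof.
by rewrite /eps -signr_odd; case: odd; rewrite ?expr0 ?expr1 ?mulr1 // mulrNN mulr1.
Qed.

Lemma alpha_coef (D C : {set T}) : alpha D C =
  (#|stab D|%:R)^-1 * \sum_(s : 'S_n) eps s D * (C == edge_perm s @: D)%:R.
Proof.
rewrite /alpha ext_scaleE sum_ffunE; congr (_ * _); apply: eq_bigr => s _.
by rewrite mu_basis ext_act_basis ext_scaleE ext_basisE.
Qed.

Lemma inv_coef (z : ext n) : ext_invariant z -> forall (s : 'S_n) (A : {set T}),
  z (edge_perm s @: A) = eps s A * z A.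
Proof. by move=> zi s A; rewrite -{1}(zi s) ext_act_coef. Qed.

Lemma alpha_invariant (D : {set T}) : ext_invariant (alpha D).
Proof.
move=> t; apply/ffunP => C.
have -> : C = edge_perm t @: ((edge_perm t)^-1 @: C)%g.
  rewrite -imset_comp (eq_imset _ (fun e => permKV (edge_perm t) e)).
  by rewrite imset_id.
set A := ((edge_perm t)^-1 @: C)%g.
rewrite ext_act_coef !alpha_coef mulrCA mulr_sumr; congr (_ * _).
symmetry; rewrite (reindex_inj (mulIg t)); apply: eq_bigr => s _.
rewrite eps_cocycle edge_perm_mul imset_permM.
rewrite (inj_eq (imset_inj (@perm_inj _ (edge_perm t)))).
case: (eqVneq A (edge_perm s @: D)) => [<-|_]; last by rewrite !mulr0.
by rewrite !mulr1 mulrC.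
Qed.

Lemma stab1 (D : {set T}) : (1%g : 'S_n) \in stab D.
Proof.
rewrite inE; apply/eqP; rewrite -[RHS]imset_id; apply: eq_imset => e.
apply: val_inj; rewrite permE /=; rewrite -[RHS]imset_id; apply: eq_imset => i.
by rewrite perm1.
Qed.

Lemma alpha_self (D : {set T}) : invariant_graph D -> alpha D D = 1.
Proof.
move=> Dinv; rewrite alpha_coef.
rewrite (eq_bigr (fun s => if s \in stab D then 1 else 0)) => [|s _]; last first.
  rewrite inE eq_sym; case: eqP => [sD|_]; last by rewrite mulr0.
  have sS : s \in stab D by rewrite inE sD.
  by rewrite eps_stab // (negbTE (Dinv s sS)) expr0 mulr1.
rewrite -big_mkcond sumr_const mulVf //.
rewrite pnatr_eq0 -lt0n; apply/card_gt0P; exists 1%g; exact: stab1.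
Qed.

Lemma noninv_zero (z : ext n) : ext_invariant z -> forall (C : {set T}) s,
  s \in stab C -> odd_perm (restr_perm C (edge_perm s)) -> z C = 0.
Proof.
move=> zi C s; rewrite inE => /eqP sC odd_s.
have := inv_coef zi s C; rewrite sC eps_stab // odd_s expr1 mulN1r => H.
have : 2%:R * z C = 0 by rewrite mulr2n mulrDl mul1r {1}H addNr.
by move/eqP; rewrite mulf_eq0 pnatr_eq0 /= => /eqP.
Qed.

End Main.

End Helpers.
Import Helpers.

Theorem theorem2p8 (n : nat) (hn : (1 <= n)%N) (reps : seq {set edge n}) :
  (* reps is a choice of representatives Delta_D, one for each D in D_n *)
  uniq reps ->
  (forall D, D \in reps -> invariant_graph D) ->
  (forall D1 D2, D1 \in reps -> D2 \in reps -> graph_iso D1 D2 -> D1 = D2) ->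
  (forall D, invariant_graph D -> exists2 D', D' \in reps & graph_iso D D') ->
  (* the alpha_D form a Q-basis of the S_n-invariants *)
  [/\ forall D, D \in reps -> ext_invariant (alpha D),
      forall c : 'I_(size reps) -> rat,
        \sum_(i < size reps) ext_scale (c i) (alpha (tnth (in_tuple reps) i)) = 0 ->
        forall i, c i = 0
    & forall x : ext n, ext_invariant x ->
        exists c : 'I_(size reps) -> rat,
          x = \sum_(i < size reps) ext_scale (c i) (alpha (tnth (in_tuple reps) i))].
Proof.
move=> ureps repsinv repsiso repscover.
set D := fun i => tnth (in_tuple reps) i.
have Dr i : D i \in reps by rewrite /D mem_tnth.
have Dinj : injective D by apply/tuple_uniqP.
have Dneq i j (C : {set edge n}) (s : 'S_n) : i != j -> edge_perm s @: D i = C ->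
    graph_iso C (D j) -> False.
  move=> ij sC [u Eu]; move/negP: ij; apply; apply/eqP; apply: Dinj.
  apply: repsiso => //; exists (s * u)%g; by rewrite edge_perm_mul imset_permM sC.
split.
- by move=> D' _; exact: alpha_invariant.
- move=> c Hc j.
  have := congr1 (fun f : ext n => f (D j)) Hc; rewrite /= sum_ffunE ffunE.
  rewrite (bigD1 j) //= big1 => [|i ij]; last first.
    rewrite ext_scaleE alpha_coef big1 ?mulr0 // => s _.
    case: eqP => [E|_]; last by rewrite mulr0.
    by exfalso; apply: (Dneq i j (D j) s ij (esym E)); exists 1%g; have := stab1 (D j); rewrite inE => /eqP.
  by rewrite addr0 ext_scaleE alpha_self ?mulr1 //; apply: repsinv.
- move=> x xinv; exists (fun i => x (D i)); apply/ffunP => C; rewrite sum_ffunE.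
  case: (boolP [forall s, (s \in stab C) ==> ~~ odd_perm (restr_perm C (edge_perm s))]) => Hinv.
  + have Cinv : invariant_graph C.
      by move=> s sC; move/forallP: Hinv => /(_ s) /implyP; apply.
    have [D' D'r [u Eu]] := repscover C Cinv.
    have [k Ek] : exists k, D k = D'.
      have ik : (index D' reps < size reps)%N by rewrite index_mem.
      exists (Ordinal ik); rewrite /D (tnth_nth D') /=.
      by rewrite nth_index.
    rewrite (bigD1 k) //= big1 => [|i ik]; last first.
      rewrite ext_scaleE alpha_coef big1 ?mulr0 // => s _.
      case: eqP => [E|_]; last by rewrite mulr0.
      by exfalso; apply: (Dneq i k C s ik (esym E)); exists u; rewrite Ek.
    rewrite addr0 ext_scaleE.
    have H1 := inv_coef xinv u C; have H2 := inv_coef (alpha_invariant (D k)) u C.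
    rewrite Eu -Ek alpha_self in H1 H2; last by apply: repsinv.
    change (tnth (in_tuple reps) k) with (D k).
    by rewrite H1 mulrAC -H2 mul1r.
  + move/forallPn: Hinv => [s]; rewrite negb_imply negbK => /andP [sC odd_s].
    rewrite (noninv_zero xinv sC odd_s) big1 // => i _.
    by rewrite ext_scaleE (noninv_zero (alpha_invariant _) sC odd_s) mulr0.
Qed.
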